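(* For $n\ge2$ and all $P,Q\in\Gamma_n$, $T(P\|Q)\le \frac1{16}\Psi(P\|Q)$.
   Context: $\Gamma_n=\{P=(p_1,\dots,p_n): p_i>0,\ \sum p_i=1\}$. $T(P\|Q)=\sum_{i=1}^n\frac{p_i+q_i}{2}\ln\frac{p_i+q_i}{2\sqrt{p_iq_i}}$ (natural logarithm); $\Psi(P\|Q)=\sum_{i=1}^n\frac{(p_i-q_i)^2(p_i+q_i)}{p_iq_i}$. *)

(* Defs.v *)
From Stdlib Require Import Reals.
Open Scope R_scope.

(* A probability vector of length n is a function p : nat -> R, whose
   entries p 0, ..., p (n-1) are used. *)
Definition Gamma (n : nat) (p : nat -> R) : Prop :=
  (forall i, (i < n)%nat -> 0 < p i) /\ sum_f_R0 p (n - 1) = 1.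

(* sum over i = 0 .. n-1 (n >= 1 assumed where used) *)
Definition sumn (n : nat) (f : nat -> R) : R := sum_f_R0 f (n - 1).

Definition T_div (n : nat) (p q : nat -> R) : R :=
  sumn n (fun i => (p i + q i) / 2 * ln ((p i + q i) / (2 * sqrt (p i * q i)))).

Definition Psi_div (n : nat) (p q : nat -> R) : R :=
  sumn n (fun i => (p i - q i) ^ 2 * (p i + q i) / (p i * q i)).

(* Main.v *)
Require Import Defs.
From Stdlib Require Import Reals Lra Lia.
Open Scope R_scope.

Lemma ln_le_xm1 (x : R) : 0 < x -> ln x <= x - 1.
Proof.
  intro Hx. destruct (Rle_or_lt (ln x) (x - 1)) as [H|H]; auto.
  exfalso. apply exp_increasing in H. rewrite exp_ln in H by exact Hx.
  pose proof (exp_ineq1_le (x - 1)). lra.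
Qed.

Lemma term_le (a b : R) : 0 < a -> 0 < b ->
  (a + b) / 2 * ln ((a + b) / (2 * sqrt (a * b))) <=
  (a - b) ^ 2 * (a + b) / (a * b) * / 16.
Proof.
  intros Ha Hb.
  assert (Hab : 0 < a * b) by nra.
  set (s := sqrt (a * b)).
  assert (Hs : 0 < s) by (apply sqrt_lt_R0; exact Hab).
  assert (Hss : s * s = a * b) by (apply sqrt_sqrt; lra).
  set (x := (a + b) / (2 * s)).
  assert (Hx : 0 < x) by (unfold x; apply Rdiv_lt_0_compat; lra).
  assert (Hm : (a + b) / 2 = x * s) by (unfold x; field; lra).
  pose proof (ln_le_xm1 x Hx) as Hl.
  apply Rle_trans with ((a + b) / 2 * (x - 1)).
  { apply Rmult_le_compat_l; lra. }
  rewrite Hm. rewrite <- Hss.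
  assert (Hab2 : a + b = 2 * x * s) by lra.
  replace ((a - b) ^ 2) with ((a + b) ^ 2 - 4 * (s * s)) by (rewrite Hss; ring).
  rewrite Hab2.
  replace ((((2 * x * s) ^ 2 - 4 * (s * s)) * (2 * x * s) / (s * s) * / 16))
    with (x * s * ((x * x - 1) / 2)) by (field; lra).
  apply Rmult_le_compat_l; [apply Rlt_le, Rmult_lt_0_compat; lra | pose proof (pow2_ge_0 (x - 1)); simpl in *; lra].
Qed.

Theorem proposition3p5 (n : nat) (p q : nat -> R) :
  (2 <= n)%nat -> Gamma n p -> Gamma n q ->
  T_div n p q <= / 16 * Psi_div n p q.
Proof.
  intros Hn [Hp _] [Hq _].
  unfold T_div, Psi_div, sumn. rewrite scal_sum.
  apply sum_Rle. intros i Hi.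
  apply term_le; [apply Hp | apply Hq]; lia.
Qed.
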